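(* Let $\mathfrak{m}_1,\dots,\mathfrak{m}_n$ be maximal ideals of $R$ and $M=R/\mathfrak{m}_1\oplus\cdots\oplus R/\mathfrak{m}_n$. Then $M$ satisfies the dual of proper strong Property $\mathcal{A}$ if and only if either $\mathrm{Max}(R)=\{\mathfrak{m}_1,\dots,\mathfrak{m}_n\}$ or $\mathfrak{m}_1=\mathfrak{m}_2=\cdots=\mathfrak{m}_n$.
   Context: All rings are commutative with identity; $\mathrm{Max}(R)$ is the set of maximal ideals of $R$. For an $R$-module $M$, $W_R(M)=\{r\in R : rM\neq M\}$. $M$ satisfies the dual of proper strong Property $\mathcal{A}$ if for every proper finitely generated ideal $I=\langle a_1,\dots,a_n\rangle$ of $R$ with $a_i\in W_R(M)$ for all $i$, we have $IM\neq M$. *)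

(* Defs.v *)
From HB Require Import structures.
From mathcomp Require Import all_boot all_order all_algebra.
Set Implicit Arguments. Unset Strict Implicit. Unset Printing Implicit Defensive.
Import GRing.Theory.
Local Open Scope ring_scope.

Section Defs.
Variable R : comNzRingType.

Definition is_ideal (I : R -> Prop) : Prop :=
  I 0 /\ (forall x y, I x -> I y -> I (x - y)) /\ (forall r x, I x -> I (r * x)).

Definition proper_ideal (I : R -> Prop) : Prop := is_ideal I /\ ~ I 1.

Definition maximal_ideal (I : R -> Prop) : Prop :=
  proper_ideal I /\
  forall J : R -> Prop, proper_ideal J -> (forall x, I x -> J x) ->
    forall x, J x -> I x.

Definition gen_ideal (s : seq R) (x : R) : Prop :=
  exists c : 'I_(size s) -> R, x = \sum_(i < size s) c i * s`_i.

(* The module M = R/m_1 (+) ... (+) R/m_n, realised as R^n / (m_1 x ... x m_n):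
   elements are represented by x : 'I_n -> R, and two representatives are equal
   in M iff they agree componentwise modulo m_i. *)
Variable n : nat.
Variable m : 'I_n -> R -> Prop.

Definition eqM (x y : 'I_n -> R) : Prop := forall i, m i (x i - y i).

Definition rM_eq_M (r : R) : Prop :=
  forall y : 'I_n -> R, exists x : 'I_n -> R, eqM y (fun i => r * x i).

Definition W_M (r : R) : Prop := ~ rM_eq_M r.

Definition IM_eq_M (I : R -> Prop) : Prop :=
  forall y : 'I_n -> R, exists (k : nat) (a : 'I_k -> R) (x : 'I_k -> 'I_n -> R),
    (forall j, I (a j)) /\ eqM y (fun i => \sum_(j < k) a j * x j i).

Definition dual_proper_strong_A : Prop :=
  forall s : seq R, ~ gen_ideal s 1 -> (forall a, a \in s -> W_M a) ->
    ~ IM_eq_M (gen_ideal s).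

End Defs.

(* Main.v *)
Require Import Defs.
From HB Require Import structures.
From mathcomp Require Import all_boot all_order all_algebra.
From Stdlib Require Import Classical IndefiniteDescription FunctionalExtensionality PropExtensionality.
From mathcomp Require classical_sets.
Import GRing.Theory.
Local Open Scope ring_scope.
Set Implicit Arguments. Unset Strict Implicit.

Lemma krull (R : comNzRingType) (I : R -> Prop) : Defs.proper_ideal I ->
  exists J, maximal_ideal J /\ (forall x, I x -> J x).
Proof.
move=> [[I0 [ID IM]] I1].
pose P := fun A : R -> Prop => (forall x, ~ A x) \/ (Defs.proper_ideal A /\ forall x, I x -> A x).
have [A [PA Amax]] : exists A, P A /\ forall B, classical_sets.proper A B -> ~ P B.
  apply: classical_sets.Zorn_bigcup => F FP Ftot.
  rewrite /classical_sets.bigcup /=.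
  case: (classic (exists B, F B /\ exists x, B x)) => [[B [FB [b Bb]]]|nB]; last first.
    left => x [X FX Xx]; apply: nB; exists X; split => //; by exists x.
  have Pne : forall X y, F X -> X y -> Defs.proper_ideal X /\ forall x, I x -> X x.
    move=> X y FX Xy; case: (FP X FX) => // h; by case: (h y).
  right; split; [split; [split|]|].
  - exists B => //; by case: (Pne B b FB Bb) => [[[? _] _] _].
  - split.
    + move=> x y [X FX Xx] [Y FY Yy].
      case: (Ftot X Y FX FY) => sub.
      * exists Y => //; case: (Pne Y y FY Yy) => [[[_ [h _]] _] _]; apply: h => //; exact: sub.
      * exists X => //; case: (Pne X x FX Xx) => [[[_ [h _]] _] _]; apply: h => //; exact: sub.
    + move=> r x [X FX Xx]; exists X => //.
      by case: (Pne X x FX Xx) => [[[_ [_ h]] _] _]; apply: h.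
  - move=> [X FX X1]; by case: (Pne X 1 FX X1) => [[_ h] _].
  - move=> x Ix; exists B => //; by case: (Pne B b FB Bb) => [_ h]; apply: h.
case: PA => [A0|[Apr IA]].
  exfalso; apply: (Amax I); last by right.
  split; first by move=> x Ax; case: (A0 x).
  by move=> h; apply: (A0 0); apply: h.
exists A; split => //; split => // J Jpr AJ x Jx.
apply: NNPP => nAx; apply: (Amax J); last by right; split => // y /IA /AJ.
split => // h; by apply: nAx; apply: h.
Qed.

Section Lemmas.
Variable R : comNzRingType.

Lemma ideal_add (I : R -> Prop) x y : is_ideal I -> I x -> I y -> I (x + y).
Proof.
move=> [I0 [ID IM]] Ix Iy.
have := ID x (0 - y) Ix (ID 0 y I0 Iy).
by rewrite sub0r opprK.
Qed.

Lemma ideal_sum (I : R -> Prop) k (F : 'I_k -> R) : is_ideal I ->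
  (forall t, I (F t)) -> I (\sum_(t < k) F t).
Proof.
move=> hI hF; apply: (big_ind I) => //; first by case: hI.
by move=> x y; apply: ideal_add.
Qed.

Lemma ideal_mulr (I : R -> Prop) x r : is_ideal I -> I x -> I (x * r).
Proof. by move=> [_ [_ IM]] Ix; rewrite mulrC; apply: IM. Qed.

Lemma max_inv (M : R -> Prop) x : maximal_ideal M -> ~ M x ->
  exists b, M (1 - b * x).
Proof.
move=> [[[M0 [MD MM]] M1] Mmax] nMx.
pose J := fun z => exists b r, M r /\ z = r + b * x.
have hJ : is_ideal J.
  split; first by exists 0, 0; split => //; rewrite mul0r addr0.
  split.
  - move=> _ _ [b1 [r1 [Mr1 ->]]] [b2 [r2 [Mr2 ->]]].
    exists (b1 - b2), (r1 - r2); split; first exact: MD.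
    by rewrite mulrBl opprD !addrA; congr (_ + _); rewrite -!addrA; congr (_ + _); rewrite addrC.
  - move=> r _ [b1 [r1 [Mr1 ->]]]; exists (r * b1), (r * r1); split; first exact: MM.
    by rewrite mulrDr mulrA.
case: (classic (J 1)) => [[b [r [Mr e]]]|nJ1].
  exists b; have -> : 1 - b * x = r by rewrite e addrK.
  done.
exfalso; apply: nMx; apply: (Mmax J) => //.
  by move=> y My; exists 0, y; rewrite mul0r addr0.
by exists 1, 0; split => //; rewrite mul1r add0r.
Qed.

 

Lemma max_prime (M : R -> Prop) x y : maximal_ideal M -> M (x * y) -> ~ M x -> M y.
Proof.
move=> hM Mxy nMx; have [b Mb] := max_inv hM nMx.
have [[hI _] _] := hM.
have -> : y = (1 - b * x) * y + b * (x * y).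
  by rewrite mulrBl mul1r mulrA subrK.
apply: ideal_add => //; first exact: ideal_mulr.
by case: hI => _ [_ h]; apply: h.
Qed.

Lemma max_not1 (M : R -> Prop) : maximal_ideal M -> ~ M 1.
Proof. by case=> [[]]. Qed.

Lemma max_ideal (M : R -> Prop) : maximal_ideal M -> is_ideal M.
Proof. by case=> [[]]. Qed.

Lemma max_sub (A B : R -> Prop) : maximal_ideal A -> maximal_ideal B ->
  (forall x, A x -> B x) -> forall x, A x <-> B x.
Proof.
move=> hA hB AB x; split; first exact: AB.
by case: hA => _ h; apply: h => //; case: hB.
Qed.

Lemma max_diff (A B : R -> Prop) : maximal_ideal A -> maximal_ideal B ->
  ~ (forall x, A x <-> B x) -> exists x, A x /\ ~ B x.
Proof.
move=> hA hB nAB; apply: NNPP => h; apply: nAB; apply: max_sub => // x Ax.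
by apply: NNPP => nBx; apply: h; exists x.
Qed.

Lemma gen_ideal_ideal (s : seq R) : is_ideal (gen_ideal s).
Proof.
split; first by exists (fun _ => 0); rewrite big1 // => i _; rewrite mul0r.
split.
- move=> _ _ [c1 ->] [c2 ->]; exists (fun i => c1 i - c2 i).
  by rewrite -sumrB; apply: eq_bigr => i _; rewrite mulrBl.
- move=> r _ [c ->]; exists (fun i => r * c i).
  by rewrite mulr_sumr; apply: eq_bigr => i _; rewrite mulrA.
Qed.

Lemma gen_ideal_mem (s : seq R) a : a \in s -> gen_ideal s a.
Proof.
move=> as_; have lt : (index a s < size s)%N by rewrite index_mem.
exists (fun t => if t == Ordinal lt then 1 else 0).
rewrite (bigD1 (Ordinal lt)) //= eqxx mul1r big1 ?addr0; first by rewrite nth_index.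
by move=> i /negbTE ->; rewrite mul0r.
Qed.

Lemma gen_ideal_sub (s : seq R) (I : R -> Prop) : is_ideal I ->
  (forall a, a \in s -> I a) -> forall x, gen_ideal s x -> I x.
Proof.
move=> hI hs _ [c ->]; apply: ideal_sum => // t.
case: hI => _ [_ h]; apply: h; apply: hs; exact: mem_nth.
Qed.

Variable n : nat.
Variable m : 'I_n -> R -> Prop.
Hypothesis hm : forall i, maximal_ideal (m i).

Lemma IM_char (I : R -> Prop) : is_ideal I -> IM_eq_M m I ->
  forall i, exists v, I v /\ m i (1 - v).
Proof.
move=> hI hIM i; have [k [a [x [Ia e]]]] := hIM (fun j => if j == i then 1 else 0).
exists (\sum_(j < k) a j * x j i); split.
  by apply: ideal_sum => // t; apply: ideal_mulr.
by move: (e i); rewrite eqxx.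
Qed.

Lemma IM_suff (I : R -> Prop) (g : 'I_n -> R) :
  (forall i, I (g i)) -> (forall i, ~ m i (g i)) -> IM_eq_M m I.
Proof.
move=> Ig nmg y.
have hb : forall i, exists b, m i (1 - b * g i) by move=> i; apply: max_inv.
pose b i := proj1_sig (constructive_indefinite_description _ (hb i)).
have Hb : forall i, m i (1 - b i * g i)
  by move=> i; exact: (proj2_sig (constructive_indefinite_description _ (hb i))).
exists n, g, (fun j i => if j == i then b i * y i else 0); split => // i.
rewrite (bigD1 i) //= eqxx big1 ?addr0; last first.
  by move=> j /negbTE ->; rewrite mulr0.
have -> : y i - g i * (b i * y i) = (1 - b i * g i) * y i.
  by rewrite mulrBl mul1r mulrA (mulrC (g i)).
by apply: ideal_mulr => //; apply: max_ideal.
Qed.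

Lemma W_of_mem i a : m i a -> W_M m a.
Proof.
move=> mia hr; have [x e] := hr (fun j => if j == i then 1 else 0).
move: (e i); rewrite eqxx => h; apply: (max_not1 (hm i)).
have -> : (1 : R) = (1 - a * x i) + a * x i by rewrite subrK.
apply: ideal_add => //; first exact: max_ideal.
by apply: ideal_mulr => //; apply: max_ideal.
Qed.

Lemma mem_of_W a : W_M m a -> exists i, m i a.
Proof.
move=> hW; apply: NNPP => h; apply: hW => y.
have hb : forall i, exists b, m i (1 - b * a).
  by move=> i; apply: max_inv => // mia; apply: h; exists i.
pose b i := proj1_sig (constructive_indefinite_description _ (hb i)).
have Hb : forall i, m i (1 - b i * a)
  by move=> i; exact: (proj2_sig (constructive_indefinite_description _ (hb i))).
exists (fun i => b i * y i) => i.
have -> : y i - a * (b i * y i) = (1 - b i * a) * y i.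
  by rewrite mulrBl mul1r mulrA (mulrC a).
by apply: ideal_mulr => //; apply: max_ideal.
Qed.

End Lemmas.

Theorem theorem3p13 (R : comNzRingType) (n : nat) (hn : (0 < n)%N)
    (m : 'I_n -> R -> Prop) (hm : forall i, maximal_ideal (m i)) :
  dual_proper_strong_A m <->
  ((forall J : R -> Prop, maximal_ideal J <-> exists i, forall x, J x <-> m i x)
   \/ (forall i j : 'I_n, forall x, m i x <-> m j x)).
Proof.
have contra1 : forall i v, m i v -> m i (1 - v) -> False.
  move=> i v mv m1v; apply: (max_not1 (hm i)).
  have -> : (1 : R) = (1 - v) + v by rewrite subrK.
  by apply: ideal_add => //; apply: max_ideal.
split.
- move=> H; apply: NNPP => nor.
  have [nA nB] := not_or_and _ _ nor.
  have [J nJ] := not_all_ex_not _ _ nA.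
  have hJ : maximal_ideal J /\ forall i, ~ (forall x, J x <-> m i x).
    case: (classic (exists i, forall x, J x <-> m i x)) => [[i hi]|ne].
      exfalso; apply: nJ; split => _; first by exists i.
      have -> : J = m i.
        by apply: functional_extensionality => x; apply: propositional_extensionality.
      exact: hm.
    split; last by move=> i hi; apply: ne; exists i.
    by apply: NNPP => nmJ; apply: nJ; split.
  case: hJ => hJ hJne.
  have [i0 ni0] := not_all_ex_not _ _ nB.
  have [j0 nij] := not_all_ex_not _ _ ni0.
  have gen : forall k, exists g, J g /\ (m i0 g \/ m j0 g) /\ ~ m k g.
    move=> k.
    have mk : forall l, ~ (forall x, m l x <-> m k x) ->
        exists g, J g /\ m l g /\ ~ m k g.
      move=> l nlk.
      have [c [Jc nc]] := max_diff hJ (hm k) (hJne k).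
      have [d [md nd]] := max_diff (hm l) (hm k) nlk.
      exists (c * d); split; first by apply: ideal_mulr => //; apply: max_ideal.
      split; first by case: (max_ideal (hm l)) => _ [_ h]; apply: h.
      by move=> h; apply: nd; apply: (max_prime (hm k) h).
    case: (classic (forall x, m i0 x <-> m k x)) => hik.
      have [|g [Jg [mg ng]]] := mk j0.
        move=> hjk; apply: nij => x; rewrite hik hjk //.
      by exists g; split => //; split => //; right.
    have [g [Jg [mg ng]]] := mk i0 hik.
    by exists g; split => //; split => //; left.
  pose g k := proj1_sig (constructive_indefinite_description _ (gen k)).
  have Hg : forall k, J (g k) /\ (m i0 (g k) \/ m j0 (g k)) /\ ~ m k (g k).
    by move=> k; exact: (proj2_sig (constructive_indefinite_description _ (gen k))).
  pose s := map g (enum 'I_n).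
  apply: (H s).
  + move=> h1; apply: (max_not1 hJ).
    apply: (gen_ideal_sub (max_ideal hJ)) h1 => a /mapP [k _ ->]; by case: (Hg k).
  + move=> a /mapP [k _ ->]; have [_ [[h|h] _]] := Hg k.
    * exact: (W_of_mem hm h).
    * exact: (W_of_mem hm h).
  + apply: (IM_suff hm (g := g)) => k; last by case: (Hg k) => _ [].
    by apply: gen_ideal_mem; apply: map_f; rewrite mem_enum.
- case=> [hMax|hEq] s ns hW hIM.
  + have [J [hJ sJ]] := krull (I := gen_ideal s) (conj (gen_ideal_ideal s) ns).
    have [i hi] := (proj1 (hMax J)) hJ.
    have [v [sv mv]] := IM_char (gen_ideal_ideal s) hIM i.
    by apply: (contra1 i v) => //; apply/hi/sJ.
  + pose i0 := Ordinal hn.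
    have sub : forall x, gen_ideal s x -> m i0 x.
      apply: gen_ideal_sub; first exact: max_ideal.
      move=> a /hW /(mem_of_W hm) [i hi]; by apply/(hEq i).
    have [v [sv mv]] := IM_char (gen_ideal_ideal s) hIM i0.
    by apply: (contra1 i0 v) => //; apply: sub.
Qed.
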